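(* Let $G$ be a $(P_5,\text{chair})$-free graph and let $C=v_1v_2v_3v_4v_5v_1$ be an induced $C_5$ in $G$. Let $1\le i\le 5$, let $u,v\in S_4(i)$ with $uv\notin E(G)$, and let $s\in S^1_3(i)\cup S_4(i+2)\cup S_4(i-2)$. Then $s$ is either adjacent to both $u$ and $v$ or to neither.
   Context: All graphs are finite and simple; $P_5$ is the path on 5 vertices; the chair is a $P_4$ plus a vertex adjacent to exactly one of the two middle vertices of the $P_4$; ''$H$-free'' means no induced subgraph isomorphic to $H$. Indices modulo 5; for $v\notin V(C)$ let $N_C(v)=N(v)\cap V(C)$. $S^1_3(j)=\{v\notin V(C): N_C(v)=\{v_{j-1},v_j,v_{j+1}\}\}$, $S_4(j)=\{v\notin V(C): N_C(v)=\{v_{j-2},v_{j-1},v_{j+1},v_{j+2}\}\}$. *)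

(* Defs.v *)
From mathcomp Require Import all_boot.
Set Implicit Arguments. Unset Strict Implicit. Unset Printing Implicit Defensive.

Definition simple_graph (T : finType) (adj : rel T) : Prop :=
  symmetric adj /\ irreflexive adj.

Definition induced_copy (T : finType) (adj : rel T) (k : nat)
  (H : rel 'I_k) (f : 'I_k -> T) : Prop :=
  injective f /\ forall a b : 'I_k, a != b -> adj (f a) (f b) = H a b.

Definition contains_induced (T : finType) (adj : rel T) (k : nat)
  (H : rel 'I_k) : Prop := exists f : 'I_k -> T, induced_copy adj H f.

Definition H_free (T : finType) (adj : rel T) (k : nat) (H : rel 'I_k) : Prop :=
  ~ contains_induced adj H.

Definition P5_rel : rel 'I_5 :=
  fun a b => ((a : nat) == b.+1) || ((b : nat) == a.+1).

(* chair : P_4 = 0-1-2-3 plus vertex 4 adjacent only to 1 (a middle vertex) *)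
Definition chair_rel : rel 'I_5 :=
  fun a b =>
    [|| ((a : nat) < 4) && ((b : nat) < 4) && (((a : nat) == b.+1) || ((b : nat) == a.+1)),
        ((a : nat) == 4) && ((b : nat) == 1) |
        ((a : nat) == 1) && ((b : nat) == 4)].

Definition C5_rel : rel 'I_5 :=
  fun a b => ((a : nat) == (b.+1 %% 5)) || ((b : nat) == (a.+1 %% 5)).

Definition idx5 (j : 'I_5) (d : nat) : 'I_5 := inord ((j + d) %% 5).

Section Cyc.
Variables (T : finType) (adj : rel T) (c : 'I_5 -> T).

Definition VC : {set T} := [set c k | k : 'I_5].

Definition NC (v : T) : {set T} := [set x in VC | adj v x].

(* S^1_3(j): v ∉ V(C), N_C(v) = {v_{j-1}, v_j, v_{j+1}} *)
Definition S13 (j : 'I_5) : {set T} :=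
  [set v | (v \notin VC) && (NC v == [set c (idx5 j 4); c j; c (idx5 j 1)])].

(* S_4(j): v ∉ V(C), N_C(v) = {v_{j-2}, v_{j-1}, v_{j+1}, v_{j+2}} *)
Definition S4 (j : 'I_5) : {set T} :=
  [set v | (v \notin VC) &&
     (NC v == [set c (idx5 j 3); c (idx5 j 4); c (idx5 j 1); c (idx5 j 2)])].
End Cyc.

(* Main.v *)
Require Import Defs.
From mathcomp Require Import all_boot.

Lemma val_idx5 (i : 'I_5) d : nat_of_ord (idx5 i d) = (i + d) %% 5.
Proof. by rewrite /idx5 inordK // ltn_pmod. Qed.

Lemma noP5 (T : finType) (adj : rel T) a b c d e :
  simple_graph adj -> H_free adj P5_rel ->
  adj a b -> adj b c -> adj c d -> adj d e ->
  ~~ adj a c -> ~~ adj a d -> ~~ adj a e -> ~~ adj b d -> ~~ adj b e ->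
  ~~ adj c e -> False.
Proof.
move=> [sym irr] P5f ab bc cd de ac ad ae bd be ce.
have ba : adj b a by rewrite sym. have cb : adj c b by rewrite sym.
have dc : adj d c by rewrite sym. have ed : adj e d by rewrite sym.
have ca : ~~ adj c a by rewrite sym. have da : ~~ adj d a by rewrite sym.
have ea : ~~ adj e a by rewrite sym. have db : ~~ adj d b by rewrite sym.
have eb : ~~ adj e b by rewrite sym. have ec : ~~ adj e c by rewrite sym.
apply: P5f.
exists (fun k : 'I_5 => nth a [:: a; b; c; d; e] k); split.
- move=> [[|[|[|[|[|?]]]]] ?] [[|[|[|[|[|?]]]]] ?] //= H; apply/val_inj => //=;
  subst; rewrite ?irr in ab bc cd de ba cb dc ed *;
  by rewrite ?(negbTE ac, negbTE ad, negbTE ae, negbTE bd, negbTE be, negbTE ce,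
     negbTE ca, negbTE da, negbTE ea, negbTE db, negbTE eb, negbTE ec) in ab bc cd de ba cb dc ed.
- move=> [[|[|[|[|[|?]]]]] ?] [[|[|[|[|[|?]]]]] ?] //= _;
  by rewrite /P5_rel /= ?ab ?bc ?cd ?de ?ba ?cb ?dc ?ed
    ?(negbTE ac, negbTE ad, negbTE ae, negbTE bd, negbTE be, negbTE ce,
     negbTE ca, negbTE da, negbTE ea, negbTE db, negbTE eb, negbTE ec).
Qed.

Theorem mainTheorem10 (T : finType) (adj : rel T) (c : 'I_5 -> T) :
  simple_graph adj ->
  H_free adj P5_rel -> H_free adj chair_rel ->
  induced_copy adj C5_rel c ->
  forall (i : 'I_5) (u v s : T),
    u \in S4 adj c i -> v \in S4 adj c i -> ~~ adj u v ->
    s \in S13 adj c i :|: S4 adj c (idx5 i 2) :|: S4 adj c (idx5 i 3) ->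
    adj s u = adj s v.
Proof.
move=> G P5f _ [cinj cadj] i u v s Hu Hv nuv Hs.
have [sym irr] := G.
have key : forall x k, adj x (c k) = (c k \in NC adj c x).
  by move=> x k; rewrite /NC inE /VC imset_f.
have cC : forall j l, j != l -> adj (c j) (c l) = C5_rel j l by [].
have H : forall u v, u \in S4 adj c i -> v \in S4 adj c i -> ~~ adj u v ->
    adj s u -> adj s v.
  move=> {}u {}v {}Hu {}Hv {}nuv su; apply/negPn/negP => nsv.
  move: Hu Hv; rewrite !inE => /andP [_ /eqP NCu] /andP [_ /eqP NCv].
  have [j [ssj sj Hsi]] : exists j : 'I_5,
      [/\ ~~ adj s (c j), j = idx5 i 2 \/ j = idx5 i 3 & adj s (c i)].
    move: Hs; rewrite !inE => /orP [/orP [] | ] /andP [_ /eqP NCs].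
    - exists (idx5 i 2); rewrite !key NCs !inE !(inj_eq cinj) -!val_eqE /= !val_idx5;
      split; [ | by left | ];
      by case: i {NCu NCv NCs} => [[|[|[|[|[|?]]]]] ?].
    - exists (idx5 i 2); rewrite !key NCs !inE !(inj_eq cinj) -!val_eqE /= !val_idx5;
      split; [ | by left | ];
      by case: i {NCu NCv NCs} => [[|[|[|[|[|?]]]]] ?].
    - exists (idx5 i 3); rewrite !key NCs !inE !(inj_eq cinj) -!val_eqE /= !val_idx5;
      split; [ | by right | ];
      by case: i {NCu NCv NCs} => [[|[|[|[|[|?]]]]] ?].
  clear Hs.
  have uj : adj u (c j).
    rewrite key NCu !inE !(inj_eq cinj) -!val_eqE /=; case: sj => ->;
    rewrite !val_idx5; by case: i {NCu NCv Hsi} => [[|[|[|[|[|?]]]]] ?].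
  have vj : adj v (c j).
    rewrite key NCv !inE !(inj_eq cinj) -!val_eqE /=; case: sj => ->;
    rewrite !val_idx5; by case: i {NCu NCv Hsi} => [[|[|[|[|[|?]]]]] ?].
  have ui : ~~ adj u (c i).
    rewrite key NCu !inE !(inj_eq cinj) -!val_eqE /= !val_idx5;
    by case: i {NCu NCv Hsi sj} => [[|[|[|[|[|?]]]]] ?].
  have vi : ~~ adj v (c i).
    rewrite key NCv !inE !(inj_eq cinj) -!val_eqE /= !val_idx5;
    by case: i {NCu NCv Hsi sj ui} => [[|[|[|[|[|?]]]]] ?].
  have ij : ~~ adj (c i) (c j).
    rewrite cC; last (rewrite -val_eqE /=; case: sj => ->; rewrite val_idx5;
      by case: i {NCu NCv Hsi ui vi} => [[|[|[|[|[|?]]]]] ?]).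
    case: sj => ->; rewrite /C5_rel !val_idx5;
    by case: i {NCu NCv Hsi ui vi} => [[|[|[|[|[|?]]]]] ?].
  apply: (@noP5 _ adj (c i) s u (c j) v G P5f).
  all: try by [].
  all: try by rewrite sym.

apply/idP/idP; first exact: H.
by apply: H => //; rewrite sym.
Qed.
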